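(* Let $d \in \mathbf{N}=\{1,2,\dots\}$. Then the following two statements hold. (i) For every $N \in \mathbf{N}$: a measure $\mu$ maximizes $E_\infty$ over $\mathcal{P}_N^{=}(\mathbf{S}^d)$ if and only if there exist an orthonormal basis $v_1,\dots,v_{d+1}$ of $\mathbf{R}^{d+1}$ and points $x_1,\dots,x_N \in \mathbf{S}^d$ such that $\mu = \frac{1}{N}\sum_{i=1}^N \delta_{x_i}$ and $x_i \in \{v_j,-v_j\}$ whenever $i \equiv j \pmod{d+1}$. (ii) A measure $\mu$ maximizes $E_\infty$ over $\mathcal{P}_{\mathrm{fin}}(\mathbf{S}^d)$ if and only if there exists an orthonormal basis $v_1,\dots,v_{d+1}$ of $\mathbf{R}^{d+1}$ such that $\mu = \sum_{i=1}^{d+1}(a_i\delta_{v_i} + b_i\delta_{-v_i})$ with $a_i,b_i \ge 0$ and $a_i+b_i = \frac{1}{d+1}$ for all $i=1,\dots,d+1$.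
   Context: $\mathbf{S}^d=\{x\in\mathbf{R}^{d+1}: |x|=1\}$. Define $\Lambda^\infty:\mathbf{S}^d\times\mathbf{S}^d\to\{0,1\}$ by $\Lambda^\infty(x,y)=1$ if $x\cdot y=0$ and $\Lambda^\infty(x,y)=0$ otherwise. For a finite nonnegative Borel measure $\mu$ on $\mathbf{S}^d$, $E_\infty(\mu)=\frac12\iint \Lambda^\infty(x,y)\,d\mu(x)\,d\mu(y)$. $\delta_x$ denotes the Dirac probability measure at $x$. $\mathcal{P}_N^{=}(\mathbf{S}^d)$ is the set of probability measures of the form $\frac1N\sum_{i=1}^N\delta_{x_i}$ with $x_i\in\mathbf{S}^d$ (not necessarily distinct). $\mathcal{P}_{\mathrm{fin}}(\mathbf{S}^d)$ is the set of Borel probability measures on $\mathbf{S}^d$ with finite support. *)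

(* Defs.v *)
From HB Require Import structures.
From mathcomp Require Import all_boot all_order all_algebra.
From mathcomp Require Import all_classical all_reals.
Set Implicit Arguments. Unset Strict Implicit. Unset Printing Implicit Defensive.
Import Order.TTheory GRing.Theory Num.Theory.
Local Open Scope classical_set_scope.
Local Open Scope ring_scope.

(* A finitely supported Borel measure mu on S^d is encoded by its
   point-mass function  w x = mu({x})  (a finite Borel measure with finite
   support is determined by these values). *)

Definition vec (R : realType) (d : nat) := 'rV[R]_(d.+1).

Definition dotv (R : realType) (d : nat) (u v : vec R d) : R :=
  \sum_(i < d.+1) u 0 i * v 0 i.

Definition sphere (R : realType) (d : nat) : set (vec R d) :=
  [set x | dotv x x = 1].

Definition orthonormal_basis (R : realType) (d : nat)
  (v : 'I_d.+1 -> vec R d) : Prop :=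
  forall i j : 'I_d.+1, dotv (v i) (v j) = (i == j)%:R.

Definition dirac_w (R : realType) (d : nat) (x : vec R d) : vec R d -> R :=
  fun y => (y == x)%:R.

Definition Lambda_inf (R : realType) (d : nat) (x y : vec R d) : R :=
  (dotv x y == 0)%:R.

(* E_infty(mu) = 1/2 \iint Lambda^infty d mu d mu, for finitely supported mu
   (sums over the finite support of w) *)
Definition E_inf (R : realType) (d : nat) (w : vec R d -> R) : R :=
  2^-1 * \sum_(x \in [set: vec R d]) \sum_(y \in [set: vec R d])
            (Lambda_inf x y * w x * w y).

Definition P_fin (R : realType) (d : nat) (w : vec R d -> R) : Prop :=
  [/\ finite_set [set x | w x != 0],
      (forall x, 0 <= w x),
      (forall x, w x != 0 -> sphere x) &
      \sum_(x \in [set: vec R d]) w x = 1].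

Definition P_N (R : realType) (d N : nat) (w : vec R d -> R) : Prop :=
  exists x : 'I_N -> vec R d,
    (forall i, sphere (x i)) /\
    w = (fun y => N%:R^-1 * \sum_(i < N) dirac_w (x i) y).

Definition maximizes (R : realType) (d : nat) (P : (vec R d -> R) -> Prop)
  (E : (vec R d -> R) -> R) (w : vec R d -> R) : Prop :=
  P w /\ forall u, P u -> E u <= E w.

(* Main.v *)
Require Import Defs.
From HB Require Import structures.
From mathcomp Require Import all_boot all_order all_algebra.
From mathcomp Require Import all_classical all_reals.
From mathcomp Require Import ring lra zify.
From mathcomp Require Import fingroup perm.
Set Implicit Arguments. Unset Strict Implicit. Unset Printing Implicit Defensive.
Import Order.TTheory GRing.Theory Num.Theory.
Local Open Scope classical_set_scope.
Local Open Scope ring_scope.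
Lemma dotvC (R : realType) (d : nat) (u v : vec R d) : dotv u v = dotv v u.
Proof. by apply: eq_bigr => i _; rewrite mulrC. Qed.

Lemma dotvNr (R : realType) (d : nat) (u v : vec R d) : dotv u (- v) = - dotv u v.
Proof. rewrite /dotv -sumrN; apply: eq_bigr => i _; by rewrite mxE mulrN. Qed.

Lemma dotvNl (R : realType) (d : nat) (u v : vec R d) : dotv (- u) v = - dotv u v.
Proof. by rewrite dotvC dotvNr dotvC. Qed.

Lemma dotvZl (R : realType) (d : nat) (a : R) (u v : vec R d) :
  dotv (a *: u) v = a * dotv u v.
Proof. rewrite /dotv mulr_sumr; apply: eq_bigr => i _; by rewrite mxE mulrA. Qed.

Lemma dotv_suml (R : realType) (d : nat) n (f : 'I_n -> vec R d) (v : vec R d) :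
  dotv (\sum_(i < n) f i) v = \sum_(i < n) dotv (f i) v.
Proof.
rewrite /dotv exchange_big /=; apply: eq_bigr => j _.
by rewrite summxE mulr_suml.
Qed.

Lemma dotv_ge0 (R : realType) (d : nat) (u : vec R d) : 0 <= dotv u u.
Proof. by apply: sumr_ge0 => i _; rewrite -expr2 sqr_ge0. Qed.

Lemma dotv_eq0 (R : realType) (d : nat) (u : vec R d) : dotv u u = 0 -> u = 0.
Proof.
move=> /eqP; rewrite psumr_eq0; last by move=> i _; rewrite -expr2 sqr_ge0.
move=> /allP H; apply/matrixP => i j; rewrite [i]ord1 mxE.
have := H j (mem_index_enum _); rewrite implyTb mulf_eq0 orbb => /eqP //.
Qed.

Definition mxof (R : realType) (d k : nat) (f : 'I_k -> vec R d) : 'M[R]_(k, d.+1) :=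
  \matrix_(i, j) f i 0 j.

Lemma mxof_tr (R : realType) (d k l : nat) (f : 'I_k -> vec R d) (g : 'I_l -> vec R d) i j :
  (mxof f *m (mxof g)^T) i j = dotv (f i) (g j).
Proof. rewrite mxE; apply: eq_bigr => t _; by rewrite !mxE. Qed.

Lemma row_mxof (R : realType) (d k : nat) (f : 'I_k -> vec R d) i : row i (mxof f) = f i.
Proof. by apply/rowP => j; rewrite !mxE. Qed.

Lemma onb_expand (R : realType) (d : nat) (v : 'I_d.+1 -> vec R d) (z : vec R d) :
  orthonormal_basis v -> z = \sum_(k < d.+1) dotv z (v k) *: v k.
Proof.
move=> hv.
have H1 : mxof v *m (mxof v)^T = 1%:M.
  by apply/matrixP => i j; rewrite mxof_tr hv !mxE.
have H2 := mulmx1C H1.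
rewrite {1}(_ : z = (z *m (mxof v)^T) *m mxof v); last by rewrite -mulmxA H2 mulmx1.
rewrite mulmx_sum_row; apply: eq_bigr => k _; rewrite row_mxof; congr (_ *: _).
rewrite mxE; apply: eq_bigr => t _; by rewrite !mxE.
Qed.

Lemma onb_pm (R : realType) (d : nat) (v : 'I_d.+1 -> vec R d) (z : vec R d) j :
  orthonormal_basis v -> dotv z z = 1 -> (forall k, k != j -> dotv z (v k) = 0) ->
  z = v j \/ z = - v j.
Proof.
move=> hv hz hk.
have [c E] : exists c, z = c *: v j.
  exists (dotv z (v j)).
  rewrite {1}(onb_expand z hv) (bigD1 j) //= big1 ?addr0 // => k /hk ->.
  by rewrite scale0r.
have : c ^+ 2 = 1.
  by rewrite -hz E dotvZl dotvC dotvZl hv eqxx mulr1 expr2.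
move/eqP; rewrite sqrf_eq1 => /orP[] /eqP hc; rewrite E hc.
  by left; rewrite scale1r.
by right; rewrite scaleN1r.
Qed.

Definition ons (R : realType) (d : nat) (s : seq (vec R d)) :=
  uniq s /\ forall p q, p \in s -> q \in s -> dotv p q = (p == q)%:R.

Lemma ons_nth (R : realType) (d : nat) (s : seq (vec R d)) :
  ons s -> forall i j : 'I_(size s), dotv (nth 0 s i) (nth 0 s j) = (i == j)%:R.
Proof.
move=> [us hs] i j; rewrite hs ?mem_nth // nth_uniq //.
Qed.

Lemma ons_size (R : realType) (d : nat) (s : seq (vec R d)) :
  ons s -> (size s <= d.+1)%N.
Proof.
move=> hs.
set A := mxof (fun i : 'I_(size s) => nth 0 s i).
have H1 : A *m A^T = 1%:M.
  by apply/matrixP => i j; rewrite mxof_tr ons_nth // !mxE.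
have := mxrankM_maxl A A^T; rewrite H1 mxrank1 => h.
exact: leq_trans h (rank_leq_col A).
Qed.

Lemma ons_orth (R : realType) (d : nat) (s : seq (vec R d)) :
  ons s -> (size s < d.+1)%N -> exists z, dotv z z = 1 /\ forall p, p \in s -> dotv z p = 0.
Proof.
move=> hs hlt.
set A := mxof (fun i : 'I_(size s) => nth 0 s i).
set K := kermx A^T.
have rK : (0 < \rank K)%N.
  rewrite /K mxrank_ker subn_gt0; apply: leq_ltn_trans hlt; exact: rank_leq_col.
have [i hi] : exists i, row i K != 0.
  apply/existsP; apply: contraTT rK; rewrite negb_exists => /forallP hK.
  have -> : K = 0.
    apply/row_matrixP => i; rewrite row0; apply/eqP; by have := hK i; rewrite negbK.
  by rewrite mxrank0.
set z0 := row i K.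
have hz0 : forall p, p \in s -> dotv z0 p = 0.
  move=> p hp.
  have : (z0 *m A^T) = 0 by rewrite /z0 -row_mul mulmx_ker row0.
  move/matrixP => /(_ 0 (Ordinal (eq_ind_r is_true hp (index_mem p s)))).
  rewrite !mxE => <-; rewrite /dotv; apply: eq_bigr => t _; by rewrite !mxE /= nth_index.
have t0 : 0 < dotv z0 z0.
  rewrite lt_def dotv_ge0 andbT; apply: contra hi => /eqP /dotv_eq0 h; apply/eqP; exact: h.
set a := (Num.sqrt (dotv z0 z0))^-1.
exists (a *: z0); split.
  rewrite dotvZl dotvC dotvZl mulrA -expr2 /a exprVn sqr_sqrtr ?ltW // mulVf //.
  by rewrite gt_eqF.
by move=> p hp; rewrite dotvZl hz0 // mulr0.
Qed.

Lemma ons_extend (R : realType) (d : nat) (s : seq (vec R d)) :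
  ons s -> exists v : 'I_d.+1 -> vec R d, orthonormal_basis v /\
    forall j : 'I_d.+1, (j < size s)%N -> v j = nth 0 s j.
Proof.
move=> hs; have := ons_size hs.
move: {2}(d.+1 - size s)%N (erefl (d.+1 - size s)%N) => n.
elim: n s hs => [|n IH] s hs hn hle.
  have es : size s = d.+1 by apply/eqP; rewrite eqn_leq hle /= -subn_eq0 hn.
  exists (fun j => nth 0 s j); split => //.
  move=> i j.
  have := ons_nth hs (cast_ord (esym es) i) (cast_ord (esym es) j).
  by rewrite /= (inj_eq (@cast_ord_inj _ _ _)).
have hlt : (size s < d.+1)%N by rewrite -subn_gt0 hn.
have [z [hz hzs]] := ons_orth hs hlt.
have zs : z \notin s by apply/negP => /hzs; rewrite hz => /eqP; rewrite oner_eq0.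
have hs' : ons (rcons s z).
  split; first by rewrite rcons_uniq zs (proj1 hs).
  move=> p q; rewrite !mem_rcons !inE => /orP[/eqP->|hp] /orP[/eqP->|hq].
  - by rewrite eqxx.
  - rewrite hzs //; case: eqP => // e; by move: zs; rewrite e hq.
  - rewrite dotvC hzs //; case: eqP => // e; by move: zs; rewrite -e hp.
  - exact: (proj2 hs).
have e1 : (d.+1 - size (rcons s z))%N = n by rewrite size_rcons subnS hn.
have e2 : (size (rcons s z) <= d.+1)%N by rewrite size_rcons.
have [v [hv hvs]] := IH (rcons s z) hs' e1 e2.
exists v; split => // j hj; rewrite hvs ?size_rcons ?(ltn_trans hj) // nth_rcons hj //.
Qed.

Lemma fsum_seq (R : realType) (T : choiceType) (f : T -> R) (r : seq T) :
  uniq r -> (forall x, x \notin r -> f x = 0) ->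
  \sum_(x \in [set: T]) f x = \sum_(x <- r) f x.
Proof.
move=> ur hf; rewrite (fsbigE r) //.
- by apply: eq_bigl => x; rewrite mem_setT.
- by move=> i _ /hf.
Qed.

Definition Bil (R : realType) (d : nat) (s : seq (vec R d)) (f g : vec R d -> R) :=
  \sum_(p <- s) \sum_(q <- s) Lambda_inf p q * f p * g q.

Definition Fs (R : realType) (d : nat) (s : seq (vec R d)) (m : vec R d -> R) := Bil s m m.

Lemma E_Fs (R : realType) (d : nat) (r : seq (vec R d)) (m : vec R d -> R) :
  uniq r -> (forall x, x \notin r -> m x = 0) -> E_inf m = 2^-1 * Fs r m.
Proof.
move=> ur hm; rewrite /E_inf /Fs /Bil; congr (_ * _).
rewrite (@fsum_seq _ _ _ r ur); last first.
  move=> x hx; apply: fsbig1 => y _; by rewrite (hm x hx) mulr0 mul0r.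
apply: eq_bigr => x _; apply: fsum_seq => // y hy; by rewrite (hm y hy) mulr0.
Qed.

Lemma Fs_supp (R : realType) (d : nat) (r r' : seq (vec R d)) (m : vec R d -> R) :
  uniq r -> uniq r' -> (forall x, x \notin r -> m x = 0) -> (forall x, x \notin r' -> m x = 0) ->
  Fs r m = Fs r' m.
Proof.
move=> u1 u2 h1 h2.
have := E_Fs u1 h1; rewrite (E_Fs u2 h2) => h.
have h0 : (2%:R^-1 : R) != 0 by rewrite invr_eq0 pnatr_eq0.
exact: (mulfI h0 (esym h)).
Qed.

Lemma Fs_scale (R : realType) (d : nat) (r : seq (vec R d)) (m : vec R d -> R) c :
  Fs r (fun y => c * m y) = c ^+ 2 * Fs r m.
Proof.
rewrite /Fs /Bil mulr_sumr; apply: eq_bigr => p _; rewrite mulr_sumr.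
apply: eq_bigr => q _; ring.
Qed.

Lemma Bil_expand (R : realType) (d : nat) (s : seq (vec R d)) (f g : vec R d -> R) t :
  Fs s (fun y => f y + t * g y) =
  Fs s f + t * (Bil s f g + Bil s g f) + t ^+ 2 * Fs s g.
Proof.
rewrite /Fs /Bil.
transitivity (\sum_(p <- s) (\sum_(q <- s) Lambda_inf p q * f p * f q
   + t * (\sum_(q <- s) Lambda_inf p q * f p * g q + \sum_(q <- s) Lambda_inf p q * g p * f q)
   + t ^+ 2 * \sum_(q <- s) Lambda_inf p q * g p * g q)).
  apply: eq_bigr => p _; rewrite -big_split /= !mulr_sumr -!big_split /=.
  by apply: eq_bigr => q _; ring.
rewrite !big_split /= -!mulr_sumr big_split /= mulrDr //.
Qed.

Lemma sum_delta (R : realType) (d : nat) (s : seq (vec R d)) (F : vec R d -> R) u :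
  uniq s -> u \in s -> \sum_(q <- s) F q * (q == u)%:R = F u.
Proof.
move=> us hu; rewrite (bigD1_seq u) //= eqxx mulr1 big1 ?addr0 //.
by move=> q /negbTE ->; rewrite mulr0.
Qed.

Lemma Lam0 (R : realType) (d : nat) (u v : vec R d) : dotv u v != 0 -> Lambda_inf u v = 0.
Proof. by rewrite /Lambda_inf => /negbTE ->. Qed.

Lemma Lam1 (R : realType) (d : nat) (u v : vec R d) : dotv u v = 0 -> Lambda_inf u v = 1.
Proof. by rewrite /Lambda_inf => ->; rewrite eqxx. Qed.

Lemma LamC (R : realType) (d : nat) (u v : vec R d) : Lambda_inf u v = Lambda_inf v u.
Proof. by rewrite /Lambda_inf dotvC. Qed.

Definition delta2 (R : realType) (d : nat) (u v : vec R d) : vec R d -> R :=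
  fun y => (y == u)%:R - (y == v)%:R.

Lemma Bil_delta (R : realType) (d : nat) (s : seq (vec R d)) u v :
  uniq s -> u \in s -> v \in s -> dotv u u != 0 -> dotv v v != 0 -> dotv u v != 0 ->
  Fs s (delta2 u v) = 0.
Proof.
move=> us hu hv huu hvv huv.
have inner : forall p, \sum_(q <- s) Lambda_inf p q * delta2 u v p * delta2 u v q =
   delta2 u v p * (Lambda_inf p u - Lambda_inf p v).
  move=> p; rewrite -(sum_delta _ us hu) -(sum_delta _ us hv) -sumrB mulr_sumr.
  by apply: eq_bigr => q _; rewrite /delta2; ring.
rewrite /Fs /Bil (eq_bigr _ (fun p _ => inner p)).
under eq_bigr do rewrite mulrC /delta2 mulrBr.
rewrite sumrB !sum_delta // (Lam0 huu) (Lam0 hvv) (Lam0 huv) LamC (Lam0 huv).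
by rewrite ?subrr ?subr0.
Qed.

Definition mv (R : realType) (d : nat) (m : vec R d -> R) (u v : vec R d) : vec R d -> R :=
  fun y => m y + m v * ((y == u)%:R - (y == v)%:R).

Lemma Fs_merge (R : realType) (d : nat) (s : seq (vec R d)) (m : vec R d -> R) u v :
  uniq s -> u \in s -> v \in s -> dotv u u != 0 -> dotv v v != 0 -> dotv u v != 0 ->
  m u * Fs s (mv m u v) + m v * Fs s (mv m v u) = (m u + m v) * Fs s m.
Proof.
move=> us hu hv huu hvv huv.
have e1 : mv m u v = (fun y => m y + m v * delta2 u v y) by [].
have e2 : mv m v u = (fun y => m y + (- m u) * delta2 u v y).
  apply: funext => y; rewrite /mv /delta2; ring.
rewrite e1 e2 !Bil_expand Bil_delta //; ring.
Qed.

Definition exsupp (R : realType) (d : nat) (s : seq (vec R d)) (m : vec R d -> R) :=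
  [/\ uniq s, (forall p, p \in s -> dotv p p = 1),
      (forall p, (p \in s) = (m p != 0)) & (forall p, 0 <= m p)].

Definition tot (R : realType) (d : nat) (s : seq (vec R d)) (m : vec R d -> R) :=
  \sum_(p <- s) m p.

Lemma exsupp_pos (R : realType) (d : nat) (s : seq (vec R d)) m p :
  exsupp s m -> p \in s -> 0 < m p.
Proof. by case=> _ _ h1 h2 hp; rewrite lt_def -h1 hp h2. Qed.

Lemma sum_delta1 (R : realType) (d : nat) (s : seq (vec R d)) u :
  uniq s -> u \in s -> \sum_(q <- s) ((q == u)%:R : R) = 1.
Proof.
move=> us hu; rewrite -[RHS](sum_delta (fun _ => 1) us hu); apply: eq_bigr => *; by rewrite mul1r.
Qed.

Lemma exsupp_mv (R : realType) (d : nat) (s : seq (vec R d)) m u v :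
  exsupp s m -> u \in s -> v \in s -> u != v ->
  [/\ exsupp (rem v s) (mv m u v), tot (rem v s) (mv m u v) = tot s m,
      (size (rem v s) < size s)%N & Fs s (mv m u v) = Fs (rem v s) (mv m u v)].
Proof.
move=> hs hu hv nuv; have [us hsph hsm hge] := hs.
have mu := exsupp_pos hs hu; have mvp := exsupp_pos hs hv.
have mvv : mv m u v v = 0 by rewrite /mv eqxx eq_sym (negbTE nuv) ?mulr0n ?mulr1n; ring.
have mvu : mv m u v u = m u + m v by rewrite /mv eqxx (negbTE nuv) ?mulr0n ?mulr1n; ring.
have mvo : forall p, p != u -> p != v -> mv m u v p = m p.
  by move=> p /negbTE h1 /negbTE h2; rewrite /mv h1 h2 ?mulr0n; ring.
have memr : forall p, (p \in rem v s) = (p != v) && (p \in s).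
  by move=> p; rewrite (mem_rem_uniq _ us) inE.
have out : forall p, p \notin rem v s -> mv m u v p = 0.
  move=> p; rewrite memr negb_and negbK => /orP[/eqP->//|hp].
  have npu : p != u by apply: contraNneq hp => ->.
  have npv : p != v by apply: contraNneq hp => ->.
  by rewrite mvo //; apply/eqP; move: hp; rewrite hsm negbK.
split.
- split.
  + exact: rem_uniq.
  + by move=> p /mem_rem /hsph.
  + move=> p; rewrite memr.
    have [->|npv] := eqVneq p v; first by rewrite mvv eqxx.
    have [->|npu] := eqVneq p u; first by rewrite hu mvu gt_eqF // addr_gt0.
    by rewrite mvo // hsm.
  + move=> p; have [->|npv] := eqVneq p v; first by rewrite mvv.
    have [->|npu] := eqVneq p u; first by rewrite mvu addr_ge0.
    by rewrite mvo.
- rewrite /tot.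
  have -> : \sum_(p <- rem v s) mv m u v p = \sum_(p <- s) mv m u v p.
    by rewrite [RHS](big_rem v) //= mvv add0r.
  rewrite /mv big_split /= -mulr_sumr sumrB.
  by rewrite !sum_delta1 // subrr mulr0 addr0.
- by rewrite size_rem // ltn_predL; case: (s) hv.
- apply: Fs_supp => //; first exact: rem_uniq.
  by move=> p; rewrite hsm negbK => /eqP hp; rewrite mvo ?hp //; apply/eqP => e;
     [move: mu | move: mvp]; rewrite -e hp ltxx.
Qed.

Lemma gen_ind (R : realType) (d : nat) (Adm : (vec R d -> R) -> Prop) (M Bnd : R)
  (St : (vec R d -> R) -> Prop) :
  (forall m u v, Adm m -> Adm (mv m u v)) ->
  (forall s m, exsupp s m -> Adm m -> tot s m = M ->
     (forall p q, p \in s -> q \in s -> p != q -> dotv p q = 0) ->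
     Fs s m <= Bnd /\ (Fs s m = Bnd -> St m)) ->
  (forall s m u v, exsupp s m -> Adm m -> tot s m = M -> u \in s -> v \in s -> u != v ->
     dotv u v != 0 -> St (mv m u v) -> St (mv m v u) -> St m) ->
  forall s m, exsupp s m -> Adm m -> tot s m = M -> Fs s m <= Bnd /\ (Fs s m = Bnd -> St m).
Proof.
move=> hAdm hbase hmerge s.
move: {2}(size s) (leqnn (size s)) => n; elim: n s => [|n IH] s hn m hs ha ht.
  apply: hbase => // p q hp; by move: hn; case: (s) hp.
case: (pselect (exists u v, [/\ u \in s, v \in s, u != v & dotv u v != 0])); last first.
  move=> hno; apply: hbase => // p q hp hq hpq; apply/eqP; apply: contraT => h.
  by exfalso; apply: hno; exists p, q.
case=> u [v [hu hv nuv huv]].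
have [e1 t1 s1 f1] := exsupp_mv hs hu hv nuv.
have nvu : v != u by rewrite eq_sym.
have [e2 t2 s2 f2] := exsupp_mv hs hv hu nvu.
have [IH1 IH1e] := IH _ (ltnSE (leq_trans s1 hn)) _ e1 (hAdm _ _ _ ha) (etrans t1 ht).
have [IH2 IH2e] := IH _ (ltnSE (leq_trans s2 hn)) _ e2 (hAdm _ _ _ ha) (etrans t2 ht).
have mu := exsupp_pos hs hu; have mvp := exsupp_pos hs hv.
have [us hsph _ _] := hs.
have huu : dotv u u != 0 by rewrite hsph ?oner_eq0.
have hvv : dotv v v != 0 by rewrite hsph ?oner_eq0.
have hm := Fs_merge m us hu hv huu hvv huv.
rewrite f1 in hm; rewrite f2 in hm.
have hpos : 0 < m u + m v by rewrite addr_gt0.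
have hle : Fs s m <= Bnd.
  rewrite -(ler_pM2l hpos) -hm mulrDl lerD // ler_pM2l //.
split => // heq.
have g1 : 0 <= m u * (Bnd - Fs (rem v s) (mv m u v)) by rewrite mulr_ge0 ?subr_ge0 // ltW.
have g2 : 0 <= m v * (Bnd - Fs (rem u s) (mv m v u)) by rewrite mulr_ge0 ?subr_ge0 // ltW.
have h1 : Fs (rem v s) (mv m u v) = Bnd.
  apply/eqP; rewrite eq_le IH1 /=.
  have : m u * (Bnd - Fs (rem v s) (mv m u v)) + m v * (Bnd - Fs (rem u s) (mv m v u)) = 0.
    rewrite (_ : forall a b c e f, a * (c - e) + b * (c - f) = (a + b) * c - (a * e + b * f));
      last by move=> *; ring.
    by rewrite hm heq subrr.
  move/eqP; rewrite paddr_eq0 // => /andP[].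
  by rewrite mulf_eq0 gt_eqF //= subr_eq0 => /eqP ->.
have h2 : Fs (rem u s) (mv m v u) = Bnd.
  apply/eqP; rewrite eq_le IH2 /=.
  have : m u * (Bnd - Fs (rem v s) (mv m u v)) + m v * (Bnd - Fs (rem u s) (mv m v u)) = 0.
    rewrite (_ : forall a b c e f, a * (c - e) + b * (c - f) = (a + b) * c - (a * e + b * f));
      last by move=> *; ring.
    by rewrite hm heq subrr.
  move/eqP; rewrite paddr_eq0 // => /andP[_].
  by rewrite mulf_eq0 gt_eqF //= subr_eq0 => /eqP ->.
exact: (hmerge s m u v hs ha ht hu hv nuv huv (IH1e h1) (IH2e h2)).
Qed.

Definition pmv (R : realType) (d : nat) (b : 'I_d.+1 -> vec R d) j (p : vec R d) :=
  p = b j \/ p = - b j.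

Lemma onb_dot_pm (R : realType) (d : nat) (b : 'I_d.+1 -> vec R d) i j p q :
  orthonormal_basis b -> pmv b i p -> pmv b j q -> (dotv p q == 0) = (i != j).
Proof.
move=> hb [->|->] [->|->]; rewrite ?dotvNl ?dotvNr ?opprK ?oppr_eq0 hb pnatr_eq0 eqb0 //.
Qed.

Lemma onb_inj (R : realType) (d : nat) (b : 'I_d.+1 -> vec R d) i j :
  orthonormal_basis b -> b i = b j -> i = j.
Proof.
move=> hb e; have := hb i j; rewrite -e hb eqxx => /esym /eqP.
by rewrite eqr_nat; case: (i =P j).
Qed.

Lemma onb_neq_neg (R : realType) (d : nat) (b : 'I_d.+1 -> vec R d) i j :
  orthonormal_basis b -> b i != - b j.
Proof.
move=> hb; apply/eqP => e; have := hb i i; rewrite {2}e dotvNr hb eqxx.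
by case: (i == j); rewrite /= ?mulr1n ?mulr0n => h; clear -h; lra.
Qed.

Lemma pmv_unit (R : realType) (d : nat) (b : 'I_d.+1 -> vec R d) j p :
  orthonormal_basis b -> pmv b j p -> dotv p p = 1.
Proof. by move=> hb [->|->]; rewrite ?dotvNl ?dotvNr ?opprK hb eqxx. Qed.

Lemma pmv_eq (R : realType) (d : nat) (b : 'I_d.+1 -> vec R d) i j p :
  orthonormal_basis b -> pmv b i p -> pmv b j p -> i = j.
Proof.
move=> hb hi hj; apply/eqP; apply/negPn.
by rewrite -(onb_dot_pm hb hi hj) (pmv_unit hb hi) oner_eq0.
Qed.

Lemma cnt_pm (R : realType) (d : nat) (b : 'I_d.+1 -> vec R d) j k p :
  orthonormal_basis b -> pmv b j p -> ((b k == p)%:R + (- b k == p)%:R : R) = (k == j)%:R.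
Proof.
move=> hb [->|->].
- rewrite [- b k == _]eq_sym (negbTE (onb_neq_neg _ _ hb)) addr0.
  by have -> : (b k == b j) = (k == j) by apply/eqP/eqP => [/(onb_inj hb)|->].
- rewrite (negbTE (onb_neq_neg _ _ hb)) add0r (inj_eq (@oppr_inj _)).
  by have -> : (b k == b j) = (k == j) by apply/eqP/eqP => [/(onb_inj hb)|->].
Qed.

Definition St (R : realType) (d : nat) (P : R -> Prop) (m : vec R d -> R) :=
  exists b : 'I_d.+1 -> vec R d, [/\ orthonormal_basis b,
    (forall p, m p != 0 -> exists j, pmv b j p) &
    forall j, P (m (b j) + m (- b j))].

Lemma pmv_pm (R : realType) (d : nat) (b : 'I_d.+1 -> vec R d) l p q :
  pmv b l p -> pmv b l q -> q = p \/ q = - p.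
Proof.
by move=> [->|->] [->|->]; [left|right|right; rewrite opprK|left].
Qed.

Lemma mv_facts (R : realType) (d : nat) (m : vec R d -> R) u v :
  u != v ->
  [/\ mv m u v u = m u + m v, mv m u v v = 0 &
      forall p, p != u -> p != v -> mv m u v p = m p].
Proof.
move=> nuv; split.
- by rewrite /mv eqxx (negbTE nuv) ?mulr0n ?mulr1n; ring.
- by rewrite /mv eqxx eq_sym (negbTE nuv) ?mulr0n ?mulr1n; ring.
- by move=> p /negbTE h1 /negbTE h2; rewrite /mv h1 h2 ?mulr0n; ring.
Qed.

Lemma St_merge (R : realType) (d : nat) (P : R -> Prop) (s : seq (vec R d)) (m : vec R d -> R) (u v : vec R d) :
  exsupp s m -> u \in s -> v \in s -> u != v -> dotv u v != 0 ->
  (forall x y, P x -> P y -> m u + m v <= x -> 0 < y) ->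
  St P (mv m u v) -> St P (mv m v u) -> St P m.
Proof.
move=> hs hu hv nuv huv Hpos [b [hb hsup hP]] [b' [hb' hsup' hP']].
have [e1 _ _ _] := exsupp_mv hs hu hv nuv.
have [_ _ _ hge1] := e1.
have mu := exsupp_pos hs hu; have mvp := exsupp_pos hs hv.
have [us hsph hsm hge] := hs.
have nvu : v != u by rewrite eq_sym.
have [m1u m1v m1o] := mv_facts m nuv.
have [m2v m2u m2o] := mv_facts m nvu.
have [j hj] : exists j, pmv b j u by apply: hsup; rewrite m1u gt_eqF // addr_gt0.
have lmj : m u + m v <= mv m u v (b j) + mv m u v (- b j).
  case: hj => e; rewrite -e m1u; [by rewrite lerDl | by rewrite lerDr].
have lpos : forall k, 0 < mv m u v (b k) + mv m u v (- b k).
  by move=> k; exact: Hpos _ _ (hP j) (hP k) lmj.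
have vperp : forall k, k != j -> dotv v (b k) = 0.
  move=> k nkj.
  have [p [hpk hp1]] : exists p, pmv b k p /\ mv m u v p != 0.
    case: (eqVneq (mv m u v (b k)) 0) => h0.
      exists (- b k); split; first by right.
      by move: (lpos k); rewrite h0 add0r => h; rewrite gt_eqF.
    by exists (b k); split => //; left.
  have npv : p != v by apply: contra hp1 => /eqP ->; rewrite m1v.
  have npu : p != u.
    apply/negP => /eqP e; rewrite e in hpk; move/eqP: nkj; apply.
    exact: pmv_eq hb hpk hj.
  have m2p : mv m v u p != 0 by rewrite m2o // -(m1o p npu npv).
  have [l hl] := hsup' p m2p.
  have [l' hl'] : exists l', pmv b' l' v by apply: hsup'; rewrite m2v gt_eqF // addr_gt0.
  have nll : l' != l.
    apply/negP => /eqP ell; rewrite ell in hl'.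
    have hup : dotv u p = 0 by apply/eqP; rewrite (onb_dot_pm hb hj hpk) eq_sym.
    move: huv; case: (pmv_pm hl hl') => ->; by rewrite ?dotvNr hup ?oppr0 eqxx.
  have : dotv v p = 0 by apply/eqP; rewrite (onb_dot_pm hb' hl' hl).
  by case: hpk => e; rewrite e ?dotvNr // => /eqP; rewrite oppr_eq0 => /eqP.
have hvj : pmv b j v := onb_pm hb (hsph v hv) vperp.
exists b; split => //.
- move=> p hp.
  have [->|npv] := eqVneq p v; first by exists j.
  have [->|npu] := eqVneq p u; first by exists j.
  by apply: hsup; rewrite m1o.
- move=> k.
  have e : mv m u v (b k) + mv m u v (- b k) = m (b k) + m (- b k) +
     m v * ((((b k == u)%:R + (- b k == u)%:R)) - (((b k == v)%:R + (- b k == v)%:R))).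
    by rewrite /mv; ring.
  rewrite (cnt_pm _ hb hj) (cnt_pm _ hb hvj) subrr mulr0 addr0 in e.
  by rewrite -e; exact: hP.
Qed.

Definition clique (R : realType) (d : nat) (s : seq (vec R d)) :=
  forall p q, p \in s -> q \in s -> p != q -> dotv p q = 0.

Lemma clique_ons (R : realType) (d : nat) (s : seq (vec R d)) m :
  exsupp s m -> clique s -> ons s.
Proof.
move=> [us hsph _ _] hc; split => // p q hp hq.
have [->|npq] := eqVneq p q; first by rewrite hsph.
by rewrite hc.
Qed.

Lemma sum_const_seq (R : realType) (T : Type) (s : seq T) (c : R) :
  \sum_(p <- s) c = (size s)%:R * c.
Proof.
elim: s => [|x s IH]; first by rewrite big_nil mul0r.
by rewrite big_cons IH /= -add1n natrD mulrDl mul1r.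
Qed.

Lemma Fs_clique (R : realType) (d : nat) (s : seq (vec R d)) m :
  exsupp s m -> clique s -> Fs s m = tot s m ^+ 2 - \sum_(p <- s) m p ^+ 2.
Proof.
move=> hs hc; have [us hsph _ _] := hs.
have inner : forall p, p \in s ->
    \sum_(q <- s) Lambda_inf p q * m p * m q = m p * (tot s m - m p).
  move=> p hp; rewrite /tot (bigD1_seq p) //= (bigD1_seq p hp us) /=.
  rewrite Lam0 ?hsph ?oner_eq0 // !mul0r add0r addrAC subrr add0r mulr_sumr.
  rewrite big_seq_cond [RHS]big_seq_cond; apply: eq_bigr => q /andP[hq nqp].
  by rewrite Lam1 ?mul1r // hc // eq_sym.
rewrite /Fs /Bil big_seq (eq_bigr _ inner) -big_seq.
under eq_bigr do rewrite mulrBr.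
by rewrite sumrB -mulr_suml expr2.
Qed.

Lemma clique_basis (R : realType) (d : nat) (s : seq (vec R d)) m :
  exsupp s m -> clique s ->
  exists b : 'I_d.+1 -> vec R d, [/\ orthonormal_basis b,
    (forall p, m p != 0 -> exists j, pmv b j p),
    (forall j, m (- b j) = 0),
    (forall j : 'I_d.+1, (j < size s)%N -> b j \in s) &
    (forall j : 'I_d.+1, (size s <= j)%N -> m (b j) = 0)].
Proof.
move=> hs hc; have [us hsph hsm hge] := hs.
have ho := clique_ons hs hc.
have [b [hb hbs]] := ons_extend ho.
have hsz := ons_size ho.
have memb : forall p, p \in s -> exists j : 'I_d.+1, (j < size s)%N /\ p = b j.
  move=> p hp.
  have hi : (index p s < d.+1)%N by apply: leq_trans hsz; rewrite index_mem.
  exists (Ordinal hi); split; first by rewrite /= index_mem.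
  by rewrite hbs /= ?index_mem // nth_index.
have outs : forall p, p \notin s -> m p = 0 by move=> p; rewrite hsm negbK => /eqP.
exists b; split => //.
- move=> p; rewrite -hsm => /memb [j [_ ->]]; exists j; by left.
- move=> j; apply: outs; apply/negP => /memb [i [_ e]].
  by move: (onb_neq_neg i j hb); rewrite -e eqxx.
- by move=> j hj; rewrite hbs // mem_nth.
- move=> j hj; apply: outs; apply/negP => /memb [i [hi e]].
  have := onb_inj hb e => eij; move: hi; rewrite -eij.
  by rewrite ltnNge hj.
Qed.

Lemma sum_quad (R : realType) (T : Type) (s : seq T) (f : T -> R) a b :
  \sum_(p <- s) (f p - a) * (f p - b) =
  \sum_(p <- s) f p ^+ 2 - (a + b) * \sum_(p <- s) f p + (size s)%:R * (a * b).
Proof.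
elim: s => [|x s IH]; first by rewrite !big_nil /= mulr0n mul0r; ring.
rewrite !big_cons IH /= mulrS; ring.
Qed.

Definition cst (R : realType) (d : nat) : R := (d.+1)%:R^-1.

Lemma cst_mul (R : realType) (d : nat) : (d.+1)%:R * cst R d = 1.
Proof. by rewrite /cst mulfV // pnatr_eq0. Qed.

Lemma base_c (R : realType) (d : nat) (s : seq (vec R d)) m :
  exsupp s m -> tot s m = 1 -> clique s ->
  Fs s m <= 1 - cst R d /\ (Fs s m = 1 - cst R d -> St (fun x => x = cst R d) m).
Proof.
move=> hs ht hc.
have [b [hb hsup hneg hin hout]] := clique_basis hs hc.
have hsz : (size s <= d.+1)%N by apply: ons_size; exact: clique_ons hs hc.
set c := cst R d.
have hc1 : (d.+1)%:R * c = 1 := cst_mul R d.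
have hq := sum_quad s m c c.
rewrite -/(tot s m) ht mulr1 in hq.
set Q := \sum_(p <- s) (m p - c) * (m p - c) in hq.
have Q0 : 0 <= Q by apply: sumr_ge0 => p _; rewrite -expr2 sqr_ge0.
have hF := Fs_clique hs hc; rewrite ht expr1n in hF.
have hk : (size s)%:R <= (d.+1)%:R :> R by rewrite ler_nat.
have cc : 0 <= c * c by rewrite mulr_ge0 // invr_ge0 ler0n.
have E1 : Fs s m = 1 - Q - (c + c) + (size s)%:R * (c * c) by rewrite hF hq; ring.
have E2 : (d.+1)%:R * (c * c) = c by rewrite mulrA hc1 mul1r.
have hk2 : (size s)%:R * (c * c) <= (d.+1)%:R * (c * c) by rewrite ler_wpM2r.
split.
  rewrite E1; rewrite E2 in hk2; lra.
move=> heq.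
have hQ : Q = 0 by rewrite E1 in heq; rewrite E2 in hk2; lra.
have hk3 : (size s)%:R * (c * c) = (d.+1)%:R * (c * c) by rewrite E1 E2 hQ in heq *; lra.
have cc0 : c * c != 0 by rewrite mulf_neq0 // invr_eq0 pnatr_eq0.
move/(mulIf cc0)/eqP: hk3; rewrite eqr_nat => /eqP hsd.
have hmc : forall p, p \in s -> m p = c.
  move: hQ; rewrite /Q => /eqP; rewrite psumr_eq0; last by move=> p _; rewrite -expr2 sqr_ge0.
  move=> /allP H p hp; have := H p hp; rewrite implyTb mulf_eq0 orbb subr_eq0 => /eqP //.
exists b; split => // j.
by rewrite hneg addr0 hmc // hin // hsd.
Qed.

Definition Adm (R : realType) (d : nat) (m : vec R d -> R) := forall p, exists n : nat, m p = n%:R.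

Definition Pd (R : realType) (d N : nat) (x : R) :=
  x = (N %/ d.+1)%:R \/ x = (N %/ d.+1).+1%:R.

Definition BndD (R : realType) (d N : nat) : R :=
  N%:R ^+ 2 - (((N %/ d.+1) + (N %/ d.+1).+1)%:R * N%:R
     - (d.+1)%:R * ((N %/ d.+1) * (N %/ d.+1).+1)%:R).

Lemma natquad (R : realType) (n q : nat) : 0 <= (n%:R - q%:R) * (n%:R - q.+1%:R) :> R.
Proof.
case: (leqP n q) => h.
  apply: mulr_le0; rewrite subr_le0 ler_nat //; exact: leq_trans h _.
by apply: mulr_ge0; rewrite subr_ge0 ler_nat // ltnW.
Qed.

Lemma base_d (R : realType) (d N : nat) (s : seq (vec R d)) m :
  exsupp s m -> Adm m -> tot s m = N%:R -> clique s ->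
  Fs s m <= BndD R d N /\ (Fs s m = BndD R d N -> St (Pd d N) m).
Proof.
move=> hs ha ht hc.
have [b [hb hsup hneg hin hout]] := clique_basis hs hc.
have hsz : (size s <= d.+1)%N by apply: ons_size; exact: clique_ons hs hc.
set q := (N %/ d.+1)%N.
have hq := sum_quad s m q%:R q.+1%:R.
rewrite -/(tot s m) ht in hq.
set Q := \sum_(p <- s) (m p - q%:R) * (m p - q.+1%:R) in hq.
have Q0 : 0 <= Q by apply: sumr_ge0 => p _; have [n ->] := ha p; exact: natquad.
have hF := Fs_clique hs hc; rewrite ht in hF.
set K := (size s)%:R : R.
have hk : K <= (d.+1)%:R :> R by rewrite ler_nat.
set QQ := (q%:R * q.+1%:R : R).
have QQ0 : 0 <= QQ by rewrite mulr_ge0.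
have E1 : Fs s m = N%:R ^+ 2 - Q - (q%:R + q.+1%:R) * N%:R + K * QQ by rewrite hF hq /K /QQ; ring.
have hB : BndD R d N = N%:R ^+ 2 - (q%:R + q.+1%:R) * N%:R + (d.+1)%:R * QQ.
  by rewrite /BndD -/q natrD natrM /QQ; ring.
have hk2 : K * QQ <= (d.+1)%:R * QQ by rewrite ler_wpM2r.
split.
  rewrite E1 hB; lra.
move=> heq.
have hQ : Q = 0 by rewrite E1 hB in heq; lra.
have hk3 : K * QQ = (d.+1)%:R * QQ by rewrite E1 hB hQ in heq; lra.
have hmq : forall p, p \in s -> Pd d N (m p).
  move: hQ; rewrite /Q => /eqP; rewrite psumr_eq0; last first.
    by move=> p _; have [n ->] := ha p; exact: natquad.
  move=> /allP H p hp; have := H p hp; rewrite implyTb mulf_eq0 !subr_eq0.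
  by case/orP => /eqP h; [left|right].
exists b; split => // j.
rewrite hneg addr0.
case: (ltnP j (size s)) => hj; first exact: hmq (hin j hj).
rewrite hout //; left.
have hlt : K != (d.+1)%:R by rewrite /K eqr_nat; apply: contraTneq hj => ->; rewrite -ltnNge.
have : QQ = 0.
  apply/eqP; apply: contraNT hlt => h; apply/eqP; exact: (mulIf h hk3).
move/eqP; rewrite /QQ mulf_eq0 !pnatr_eq0 => /orP[/eqP hq0|//].
by rewrite -/q hq0.
Qed.

Lemma main_c (R : realType) (d : nat) (s : seq (vec R d)) m :
  exsupp s m -> tot s m = 1 ->
  Fs s m <= 1 - cst R d /\ (Fs s m = 1 - cst R d -> St (fun x => x = cst R d) m).
Proof.
move=> hs ht.
have := @gen_ind R d (fun _ => True) 1 (1 - cst R d) (St (fun x => x = cst R d)).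
apply => //.
- by move=> s' m' hs' _ ht' hc; exact: base_c.
- move=> s' m' u v hs' _ _ hu hv nuv huv; apply: (St_merge hs') => // x y _ -> _.
  by rewrite /cst invr_gt0 ltr0n.
Qed.

Lemma Adm_mv (R : realType) (d : nat) (m : vec R d -> R) u v : Adm m -> Adm (mv m u v).
Proof.
move=> ha y; rewrite /mv.
have [->|nyu] := eqVneq y u.
  have [->|nuv] := eqVneq u v; first by rewrite subrr mulr0 addr0; exact: ha.
  rewrite /= mulr0n mulr1n subr0 mulr1.
  by have [n1 ->] := ha u; have [n2 ->] := ha v; exists (n1 + n2)%N; rewrite natrD.
have [->|nyv] := eqVneq y v.
  by rewrite /= mulr0n mulr1n sub0r mulrN1 subrr; exists 0%N.
by rewrite /= !mulr0n subrr mulr0 addr0; exact: ha.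
Qed.

Lemma main_d (R : realType) (d N : nat) (s : seq (vec R d)) m :
  exsupp s m -> Adm m -> tot s m = N%:R ->
  Fs s m <= BndD R d N /\ (Fs s m = BndD R d N -> St (Pd d N) m).
Proof.
move=> hs ha ht.
have := @gen_ind R d (@Adm R d) N%:R (BndD R d N) (St (Pd d N)).
apply => //.
- by move=> m' u v; exact: Adm_mv.
- by move=> s' m' hs' ha' ht' hc; exact: base_d.
- move=> s' m' u v hs' ha' _ hu hv nuv huv; apply: (St_merge hs') => // x y hx hy hle.
  have [n1 e1] := ha' u; have [n2 e2] := ha' v.
  have p1 := exsupp_pos hs' hu; have p2 := exsupp_pos hs' hv.
  rewrite e1 ltr0n in p1; rewrite e2 ltr0n in p2.
  have h2 : (2%:R : R) <= x.
    apply: le_trans hle; rewrite e1 e2 -natrD ler_nat.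
    by rewrite -(addn1 1) leq_add.
  have hq : (0 < N %/ d.+1)%N.
    case: hx => hx; rewrite hx ler_nat in h2; first by apply: leq_trans h2.
    by move: h2; rewrite ltnS.
  by case: hy => ->; rewrite ltr0n.
Qed.

Lemma sum_quad_ord (R : realType) n (f : 'I_n -> R) a b :
  \sum_(j < n) (f j - a) * (f j - b) =
  \sum_(j < n) f j ^+ 2 - (a + b) * \sum_(j < n) f j + n%:R * (a * b).
Proof.
rewrite (eq_bigr (fun j => f j ^+ 2 - (a + b) * f j + a * b)); last by move=> *; ring.
by rewrite big_split sumrB /= -mulr_sumr sumr_const card_ord mulr_natl.
Qed.

Lemma tot_supp (R : realType) (d : nat) (r r' : seq (vec R d)) (m : vec R d -> R) :
  uniq r -> uniq r' -> (forall x, x \notin r -> m x = 0) -> (forall x, x \notin r' -> m x = 0) ->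
  tot r m = tot r' m.
Proof.
by move=> u1 u2 h1 h2; rewrite /tot -(fsum_seq u1 h1) -(fsum_seq u2 h2).
Qed.

Definition r0 (R : realType) (d : nat) (b : 'I_d.+1 -> vec R d) : seq (vec R d) :=
  map b (index_enum 'I_d.+1) ++ map (fun j => - b j) (index_enum 'I_d.+1).

Lemma r0_uniq (R : realType) (d : nat) (b : 'I_d.+1 -> vec R d) :
  orthonormal_basis b -> uniq (r0 b).
Proof.
move=> hb; rewrite cat_uniq !map_inj_uniq ?index_enum_uniq //=.
- rewrite andbT; apply/hasPn => p /mapP [j _ ->]; apply/mapP => [[i _ e]].
  by move: (onb_neq_neg i j hb); rewrite e eqxx.
- by move=> i j /oppr_inj /(onb_inj hb).
- by move=> i j /(onb_inj hb).
Qed.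

Lemma r0_out (R : realType) (d : nat) (b : 'I_d.+1 -> vec R d) (m : vec R d -> R) :
  (forall p, m p != 0 -> exists j, pmv b j p) -> forall x, x \notin r0 b -> m x = 0.
Proof.
move=> hsup x hx; apply/eqP; apply: contraNT hx => /hsup [j [->|->]];
  rewrite mem_cat; apply/orP; [left|right]; apply/mapP; exists j => //; exact: mem_index_enum.
Qed.

Lemma sumD_ord (R : realType) n (F G : 'I_n -> R) :
  \sum_(k < n) F k + \sum_(k < n) G k = \sum_(k < n) (F k + G k).
Proof. by rewrite big_split. Qed.

Lemma Fs_St (R : realType) (d : nat) (b : 'I_d.+1 -> vec R d) (m : vec R d -> R) r :
  orthonormal_basis b -> (forall p, m p != 0 -> exists j, pmv b j p) ->
  uniq r -> (forall x, x \notin r -> m x = 0) ->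
  let L := fun j => m (b j) + m (- b j) in
  tot r m = \sum_(j < d.+1) L j /\
  Fs r m = (\sum_(j < d.+1) L j) ^+ 2 - \sum_(j < d.+1) L j ^+ 2.
Proof.
move=> hb hsup ur hr L.
have u0 := r0_uniq hb; have o0 := r0_out hsup.
rewrite (tot_supp ur u0 hr o0) (Fs_supp ur u0 hr o0); split.
  by rewrite /tot big_cat /= !big_map /L big_split.
have inner : forall j p, pmv b j p ->
    \sum_(q <- r0 b) Lambda_inf p q * m p * m q = m p * (\sum_(k < d.+1) L k - L j).
  move=> j p hp.
  rewrite big_cat /= !big_map sumD_ord /= (bigD1 j) //= (bigD1 j (P := predT)) //=.
  have l0 : forall k, Lambda_inf p (b k) = (j != k)%:R /\ Lambda_inf p (- b k) = (j != k)%:R.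
    move=> k; rewrite /Lambda_inf (onb_dot_pm hb hp (or_introl erefl)).
    by rewrite (onb_dot_pm hb hp (or_intror erefl)).
  have [-> ->] := l0 j; rewrite eqxx /= !mulr0n !mul0r !add0r.
  rewrite /L addrAC subrr add0r mulr_sumr; apply: eq_bigr => k hk.
  have [-> ->] := l0 k; rewrite eq_sym hk !mul1r; ring.
rewrite /Fs /Bil big_cat /= !big_map.
rewrite (eq_bigr _ (fun j _ => inner j _ (or_introl erefl))).
rewrite [X in _ + X](eq_bigr (fun j => m (- b j) * (\sum_(k < d.+1) L k - L j))); last first.
  by move=> j _; exact: inner j _ (or_intror erefl).
rewrite sumD_ord /=.
under eq_bigr do rewrite -mulrDl.
by rewrite /L (eq_bigr (fun j => L j * (\sum_(k < d.+1) L k) - L j ^+ 2));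
  [rewrite sumrB -mulr_suml expr2 | move=> j _; rewrite /L; ring].
Qed.

Lemma Pfin_supp (R : realType) (d : nat) (w : vec R d -> R) :
  P_fin w -> exists s, [/\ exsupp s w, tot s w = 1 & E_inf w = 2^-1 * Fs s w].
Proof.
case=> fin hge hsph hsum.
have [s0 e] := (finite_seqP _).1 fin.
have mem0 : forall p, (p \in s0) = (w p != 0).
  move=> p; apply/idP/idP => h.
    by have : [set` s0] p by []; rewrite -e.
  by have : [set x | w x != 0] p by []; rewrite e.
have out : forall x, x \notin undup s0 -> w x = 0.
  by move=> x; rewrite mem_undup mem0 negbK => /eqP.
exists (undup s0); split.
- split; first exact: undup_uniq.
  + by move=> p; rewrite mem_undup mem0 => /hsph.
  + by move=> p; rewrite mem_undup mem0.
  + exact: hge.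
- by rewrite /tot -(fsum_seq (undup_uniq s0) out).
- exact: E_Fs (undup_uniq s0) out.
Qed.

Definition wab (R : realType) (d : nat) (v : 'I_d.+1 -> vec R d) (a b : 'I_d.+1 -> R) :=
  fun y => \sum_(i < d.+1) (a i * dirac_w (v i) y + b i * dirac_w (- v i) y).

Lemma wab_v (R : realType) (d : nat) (v : 'I_d.+1 -> vec R d) a b j :
  orthonormal_basis v -> wab v a b (v j) = a j.
Proof.
move=> hv; rewrite /wab /dirac_w (bigD1 j) //= eqxx (negbTE (onb_neq_neg _ _ hv)).
rewrite big1 ?mulr0 ?addr0 ?mulr1 // => i nij.
have -> : (v j == v i) = false by apply/negbTE; apply: contra nij => /eqP /(onb_inj hv) ->.
by rewrite (negbTE (onb_neq_neg _ _ hv)) !mulr0 addr0.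
Qed.

Lemma wab_nv (R : realType) (d : nat) (v : 'I_d.+1 -> vec R d) a b j :
  orthonormal_basis v -> wab v a b (- v j) = b j.
Proof.
move=> hv; rewrite /wab /dirac_w (bigD1 j) //= eqxx eq_sym (negbTE (onb_neq_neg _ _ hv)).
rewrite big1 ?mulr0 ?add0r ?mulr1 ?addr0 // => i nij.
have -> : (- v j == - v i) = false.
  by apply/negbTE; apply: contra nij => /eqP /oppr_inj /(onb_inj hv) ->.
by rewrite eq_sym (negbTE (onb_neq_neg _ _ hv)) !mulr0 addr0.
Qed.

Lemma wab_out (R : realType) (d : nat) (v : 'I_d.+1 -> vec R d) a b y :
  (forall j, ~ pmv v j y) -> wab v a b y = 0.
Proof.
move=> h; rewrite /wab /dirac_w big1 // => i _.
have -> : (y == v i) = false by apply/negbTE/eqP => e; apply: (h i); left.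
have -> : (y == - v i) = false by apply/negbTE/eqP => e; apply: (h i); right.
by rewrite !mulr0 addr0.
Qed.

Lemma wab_supp (R : realType) (d : nat) (v : 'I_d.+1 -> vec R d) a b :
  forall p, wab v a b p != 0 -> exists j, pmv v j p.
Proof.
move=> p hp; case: (pselect (exists j, pmv v j p)) => // h.
by move: hp; rewrite wab_out ?eqxx // => j hj; apply: h; exists j.
Qed.

Lemma wab_Pfin (R : realType) (d : nat) (v : 'I_d.+1 -> vec R d) a b :
  orthonormal_basis v -> (forall i, 0 <= a i /\ 0 <= b i) ->
  (forall i, a i + b i = cst R d) ->
  P_fin (wab v a b) /\ E_inf (wab v a b) = 2^-1 * (1 - cst R d).
Proof.
move=> hv hab hs.
have u0 := r0_uniq hv; have o0 := r0_out (@wab_supp _ _ v a b).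
have [ht hF] := Fs_St hv (@wab_supp _ _ v a b) u0 o0.
have hL : forall j, wab v a b (v j) + wab v a b (- v j) = cst R d.
  by move=> j; rewrite wab_v // wab_nv.
rewrite (eq_bigr _ (fun j _ => hL j)) sumr_const card_ord -mulr_natl cst_mul in ht.
split; last first.
  rewrite (E_Fs u0 o0) hF (eq_bigr _ (fun j _ => hL j)) sumr_const card_ord -[cst R d *+ _]mulr_natl cst_mul.
  rewrite (eq_bigr (fun _ => cst R d ^+ 2)); last by move=> j _; rewrite hL.
  by rewrite sumr_const card_ord -[_ *+ d.+1]mulr_natl expr2 mulrA cst_mul mul1r ?mul1r ?expr1n.
split.
- apply: sub_finite_set (finite_seq (r0 v)) => p /= hp.
  by apply: contraNT hp => /o0 ->; rewrite eqxx.
- move=> y; rewrite /wab; apply: sumr_ge0 => i _.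
  by have [h1 h2] := hab i; rewrite addr_ge0 // mulr_ge0 // ler0n.
- move=> x /wab_supp [j hj]; exact: pmv_unit hv hj.
- by rewrite (fsum_seq u0 o0).
Qed.

Definition ebas (R : realType) (d : nat) : 'I_d.+1 -> vec R d := fun j => delta_mx 0 j.

Lemma ebas_onb (R : realType) (d : nat) : orthonormal_basis (@ebas R d).
Proof.
move=> i j; rewrite /dotv /ebas (bigD1 i) //= !mxE !eqxx /= mul1r big1 ?addr0.
  by rewrite eq_sym.
by move=> k /negbTE nki; rewrite !mxE nki /= mul0r.
Qed.

Lemma cst_gt0 (R : realType) (d : nat) : 0 < cst R d.
Proof. by rewrite /cst invr_gt0 ltr0n. Qed.

Lemma part2 (R : realType) (d : nat) (w : vec R d -> R) :
     maximizes (@P_fin R d) (@E_inf R d) w <->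
     exists (v : 'I_d.+1 -> vec R d) (a b : 'I_d.+1 -> R),
       [/\ orthonormal_basis v,
           (forall i, 0 <= a i /\ 0 <= b i),
           (forall i, a i + b i = (d.+1)%:R^-1) &
           w = (fun y => \sum_(i < d.+1)
                   (a i * dirac_w (v i) y + b i * dirac_w (- v i) y))].
Proof.
have h2 : (0 : R) < 2^-1 by rewrite invr_gt0 ltr0n.
split.
- move=> [hw hmax].
  have [s [hs ht hE]] := Pfin_supp hw.
  have hc := cst_gt0 R d.
  have [P0 E0] := @wab_Pfin R d (@ebas R d) (fun _ => cst R d) (fun _ => 0) (@ebas_onb R d)
     (fun _ => conj (ltW hc) (lexx 0)) (fun _ => addr0 _).
  have := hmax _ P0; rewrite E0 hE ler_pM2l // => hle.
  have [ub eqs] := main_c hs ht.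
  have [b [hb hsup hP]] := eqs (le_anti (introT andP (conj ub hle))).
  have [_ _ _ hge] := hs.
  exists b, (fun j => w (b j)), (fun j => w (- b j)); split => //.
  apply: funext => y; rewrite -/(wab b (fun j => w (b j)) (fun j => w (- b j)) y).
  case: (pselect (exists j, pmv b j y)) => [[j [->|->]]|h].
  + by rewrite wab_v.
  + by rewrite wab_nv.
  + rewrite wab_out; last by move=> j hj; apply: h; exists j.
    by apply/eqP; apply: contraT => /hsup [j hj]; exfalso; apply: h; exists j.
- move=> [v [a [b [hv hab hs ->]]]].
  have [P0 E0] := @wab_Pfin R d v a b hv hab hs.
  split => // u hu; rewrite -/(wab v a b) E0.
  have [s [hs' ht hE]] := Pfin_supp hu.
  by rewrite hE ler_pM2l //; have [] := main_c hs' ht.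
Qed.

Lemma stepdiv (n N : nat) : (0 < n)%N ->
  (N.+1 %/ n = N %/ n + ((N %% n).+1 == n))%N /\
  (N.+1 %% n = if (N %% n).+1 == n then 0 else (N %% n).+1)%N.
Proof.
move=> n0.
have e : N.+1 = (N %/ n * n + (N %% n).+1)%N by rewrite {1}(divn_eq N n) addnS.
case: eqP => h.
  rewrite e h -mulSnr mulnK // modnMl; split => //; by rewrite addn1.
have hlt : ((N %% n).+1 < n)%N by rewrite ltn_neqAle (ltn_pmod N n0) andbT; apply/eqP.
rewrite e divnMDl // (divn_small hlt) modnMDl (modn_small hlt); by rewrite !addn0.
Qed.

Lemma cntmodE (n N j : nat) : (0 < n)%N -> (j < n)%N ->
  (\sum_(i < N) ((i %% n == j) : nat) = N %/ n + (j < N %% n))%N.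
Proof.
move=> n0 jn; elim: N => [|N IH]; first by rewrite big_ord0 div0n mod0n.
rewrite big_ord_recr /= IH.
have [hd hm] := stepdiv N n0; rewrite hd hm.
have rl := ltn_pmod N n0.
set t := (N %/ n)%N; set r := (N %% n)%N in rl hd hm *.
case: (r.+1 =P n) => h; case: (ltngtP j r) => hj; rewrite /= ?eqxx //;
  try (have -> : (r == j) = false by apply/negbTE; rewrite neq_ltn hj ?orbT);
  lia.
Qed.

Lemma cntKE (n N j a : nat) : (0 < n)%N -> (j < n)%N ->
  (\sum_(i < N) (((i %% n == j) && (i %/ n < a)) : nat) =
  minn a (\sum_(i < N) ((i %% n == j) : nat)))%N.
Proof.
move=> n0 jn; elim: N => [|N IH]; first by rewrite !big_ord0 minn0.
rewrite !big_ord_recr /= IH.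
case: eqP => h /=; last by rewrite !addn0.
have hc : (\sum_(i < N) ((i %% n == j) : nat) = N %/ n)%N.
  by rewrite (cntmodE N n0 jn) -h ltnn addn0.
rewrite hc; set t := (N %/ n)%N.
by case: (ltnP t a) => ht /=; rewrite /minn; case: ltnP; case: ltnP; lia.
Qed.

Definition cnt (R : realType) (d N : nat) (x : 'I_N -> vec R d) : vec R d -> R :=
  fun y => \sum_(i < N) dirac_w (x i) y.

Definition supx (R : realType) (d N : nat) (x : 'I_N -> vec R d) : seq (vec R d) :=
  undup [seq x i | i <- index_enum 'I_N].

Lemma cnt_nat (R : realType) (d N : nat) (x : 'I_N -> vec R d) y :
  cnt x y = (\sum_(i < N) ((y == x i) : nat))%:R.
Proof. by rewrite natr_sum. Qed.

Lemma mem_supx (R : realType) (d N : nat) (x : 'I_N -> vec R d) p :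
  (p \in supx x) = (cnt x p != 0).
Proof.
rewrite mem_undup; apply/mapP/idP => [[i _ ->]|].
  rewrite /cnt (bigD1 i) //= /dirac_w eqxx gt_eqF // ltr_pwDl ?ltr01 //.
  by apply: sumr_ge0 => k _; rewrite ler0n.
move=> h; case: (pselect (exists i, p = x i)) => [[i e]|hn].
  by exists i => //; exact: mem_index_enum.
exfalso; move: h; rewrite /cnt big1 ?eqxx // => i _; rewrite /dirac_w.
by case: eqP => // e; exfalso; apply: hn; exists i.
Qed.

Lemma cnt_props (R : realType) (d N : nat) (x : 'I_N -> vec R d) :
  (forall i, sphere (x i)) ->
  [/\ exsupp (supx x) (cnt x), Adm (cnt x), tot (supx x) (cnt x) = N%:R &
      forall y, y \notin supx x -> cnt x y = 0].
Proof.
move=> hx.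
have out : forall y, y \notin supx x -> cnt x y = 0.
  by move=> y; rewrite mem_supx negbK => /eqP.
split => //.
- split; first exact: undup_uniq.
  + by move=> p; rewrite mem_undup => /mapP [i _ ->]; exact: hx.
  + exact: mem_supx.
  + by move=> p; apply: sumr_ge0 => i _; rewrite ler0n.
- by move=> p; rewrite cnt_nat; eexists.
- rewrite /tot /cnt exchange_big /=.
  rewrite (eq_bigr (fun _ => 1)) ?sumr_const ?card_ord //.
  move=> i _; apply: sum_delta1; first exact: undup_uniq.
  by rewrite mem_undup; apply/mapP; exists i => //; exact: mem_index_enum.
Qed.

Lemma E_cnt (R : realType) (d N : nat) (x : 'I_N -> vec R d) :
  (forall i, sphere (x i)) ->
  E_inf (fun y => N%:R^-1 * \sum_(i < N) dirac_w (x i) y) =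
  2^-1 * (N%:R^-1 ^+ 2 * Fs (supx x) (cnt x)).
Proof.
move=> hx; have [[us _ _ _] _ _ out] := cnt_props hx.
rewrite (E_Fs us); first by rewrite -Fs_scale.
by move=> y /out; rewrite /cnt => ->; rewrite mulr0.
Qed.

Lemma bound_d (R : realType) (d N : nat) (x : 'I_N -> vec R d) :
  (forall i, sphere (x i)) ->
  Fs (supx x) (cnt x) <= BndD R d N /\
  (Fs (supx x) (cnt x) = BndD R d N -> St (Pd d N) (cnt x)).
Proof. by move=> hx; have [hs ha ht _] := cnt_props hx; exact: main_d. Qed.

Lemma St_val_d (R : realType) (d N : nat) (L : 'I_d.+1 -> R) :
  (forall j, Pd d N (L j)) -> \sum_(j < d.+1) L j = N%:R ->
  (\sum_(j < d.+1) L j) ^+ 2 - \sum_(j < d.+1) L j ^+ 2 = BndD R d N.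
Proof.
move=> hP hS.
have hq := sum_quad_ord L (N %/ d.+1)%:R (N %/ d.+1).+1%:R.
rewrite big1 in hq; last by move=> j _; case: (hP j) => ->; rewrite subrr ?mul0r ?mulr0.
rewrite hS /BndD natrD natrM.
rewrite hS in hq.
have e : \sum_(j < d.+1) L j ^+ 2 = ((N %/ d.+1)%:R + (N %/ d.+1).+1%:R) * N%:R -
   (d.+1)%:R * ((N %/ d.+1)%:R * (N %/ d.+1).+1%:R).
  by apply/eqP; rewrite -subr_eq0 [X in _ == X]hq; apply/eqP; ring.
by rewrite e.
Qed.

Definition ordmod (d N : nat) (i : 'I_N) : 'I_d.+1 := Ordinal (ltn_pmod i (ltn0Sn d)).

Lemma modconfig (R : realType) (d N : nat) (v : 'I_d.+1 -> vec R d) (x : 'I_N -> vec R d) :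
  orthonormal_basis v ->
  (forall (i : 'I_N) (j : 'I_d.+1), (i %% d.+1)%N = j -> x i = v j \/ x i = - v j) ->
  (forall i, sphere (x i)) /\ Fs (supx x) (cnt x) = BndD R d N.
Proof.
move=> hv hmod.
have hpm : forall i, pmv v (ordmod d i) (x i) by move=> i; exact: hmod.
have hx : forall i, sphere (x i) by move=> i; exact: pmv_unit hv (hpm i).
split => //.
have [[us _ _ _] _ ht out] := cnt_props hx.
have hsup : forall p, cnt x p != 0 -> exists j, pmv v j p.
  by move=> p; rewrite -mem_supx mem_undup => /mapP [i _ ->]; exists (ordmod d i).
have [ht' hF] := Fs_St hv hsup us out.
have hL : forall j, cnt x (v j) + cnt x (- v j) =
    (\sum_(i < N) ((i %% d.+1 == j) : nat))%:R.
  move=> j; rewrite /cnt -big_split natr_sum; apply: eq_bigr => i _.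
  rewrite /= /dirac_w (cnt_pm j hv (hpm i)); congr (_%:R); by rewrite eq_sym.
rewrite hF; apply: St_val_d; last by rewrite -ht'.
move=> j; rewrite hL (cntmodE N (ltn0Sn d) (ltn_ord j)) /Pd.
by case: (_ < _)%N; rewrite ?addn0 ?addn1; [right|left].
Qed.

Lemma sum_andC (N : nat) (P Q : 'I_N -> bool) :
  \sum_(i < N) ((P i && ~~ Q i) : nat) = (\sum_(i < N) (P i : nat) - \sum_(i < N) ((P i && Q i) : nat))%N.
Proof.
have -> : (\sum_(i < N) (P i : nat) = \sum_(i < N) ((P i && Q i) : nat) + \sum_(i < N) ((P i && ~~ Q i) : nat))%N.
  by rewrite -big_split /=; apply: eq_bigr => i _; case: (P i); case: (Q i).
by rewrite addKn.
Qed.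

Lemma construct (R : realType) (d N : nat) (x : 'I_N -> vec R d) (b : 'I_d.+1 -> vec R d) :
  orthonormal_basis b -> (forall i, sphere (x i)) ->
  (forall p, cnt x p != 0 -> exists j, pmv b j p) ->
  (forall j, Pd d N (cnt x (b j) + cnt x (- b j))) ->
  exists (v : 'I_d.+1 -> vec R d) (x' : 'I_N -> vec R d),
    [/\ orthonormal_basis v, (forall i, sphere (x' i)), cnt x' = cnt x &
        forall (i : 'I_N) (j : 'I_d.+1), (i %% d.+1)%N = j -> x' i = v j \/ x' i = - v j].
Proof.
move=> hb hx hsup hP.
have n0 : (0 < d.+1)%N by [].
pose q := (N %/ d.+1)%N.
pose A j := \sum_(i < N) ((b j == x i) : nat).
pose B j := \sum_(i < N) ((- b j == x i) : nat).
pose Ln j := (A j + B j)%N.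
have hLn : forall j, Ln j = q \/ Ln j = q.+1.
  move=> k; have := hP k; rewrite !cnt_nat -natrD.
  case=> /eqP; rewrite eqr_nat => /eqP h; first by left; exact: h.
  by right; exact: h.
have [[us _ _ _] _ ht out] := cnt_props hx.
have [ht' _] := Fs_St hb hsup us out.
have hsum : (\sum_(j < d.+1) Ln j = N)%N.
  apply/eqP; rewrite -(eqr_nat R) natr_sum -ht ht'; apply/eqP; apply: eq_bigr => j _.
  by rewrite !cnt_nat natrD.
pose S := [set j | Ln j == q.+1]%SET.
have hsum2 : (\sum_(j < d.+1) Ln j = q * d.+1 + #|S|)%N.
  rewrite (eq_bigr (fun j => q + (j \in S : nat))%N); last first.
    move=> j _; rewrite /S finset.inE; case: (hLn j) => ->; rewrite ?eqxx ?addn1 //.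
    by rewrite (_ : (q == q.+1) = false) ?addn0 //; apply/negbTE; rewrite neq_ltn ltnSn.
  rewrite big_split /= big_const_ord iter_addn_0 mulnC; congr (_ + _)%N.
  by rewrite -sum1_card [RHS]big_mkcond /=; apply: eq_bigr => j _; case: (j \in S).
have hS : (#|S| < d.+1)%N.
  rewrite ltn_neqAle; have -> : (#|S| <= d.+1)%N by rewrite -[X in (_ <= X)%N]card_ord max_card.
  rewrite andbT; apply/eqP => e.
  have : (N %/ d.+1 = q.+1)%N by rewrite -hsum hsum2 e -mulSnr mulnK.
  move=> h; have : (q < q)%N by rewrite {2}/q h ltnSn.
  by rewrite ltnn.
have hr : (N %% d.+1 = #|S|)%N by rewrite -hsum hsum2 modnMDl modn_small.
pose s := enum S ++ enum (~: S).
have ss : size s = d.+1 by rewrite size_cat -!cardE cardsC card_ord.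
have us' : uniq s.
  rewrite cat_uniq !enum_uniq andbT /=; apply/hasPn => j.
  by rewrite !mem_enum finset.in_setC.
have sinj : injective (fun i : 'I_d.+1 => nth ord0 s i).
  move=> i j /eqP; rewrite nth_uniq ?ss // => /eqP; exact: val_inj.
pose sg := perm sinj.
have sgE : forall i, sg i = nth ord0 s i by move=> i; rewrite permE.
have sgS : forall i, (sg i \in S) = (i < #|S|)%N.
  move=> i; rewrite sgE nth_cat -cardE; case: ifP => h.
    by rewrite -mem_enum mem_nth // -cardE.
  have h2 : (i - #|S| < size (enum (~: S)))%N.
    by rewrite -cardE -(ltn_add2l #|S|) cardsC card_ord subnKC // leqNgt h.
  by have := mem_nth ord0 h2; rewrite mem_enum finset.in_setC => /negbTE.
have Lsg : forall i : 'I_d.+1, (Ln (sg i) = \sum_(k < N) ((k %% d.+1 == i) : nat))%N.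
  move=> i; rewrite cntmodE // hr -/q.
  have := sgS i; rewrite /S finset.inE; case: (ltnP i #|S|) => hi /=.
    by move/eqP ->; rewrite addn1.
  rewrite addn0; case: (hLn (sg i)) => // ->; by rewrite eqxx.
pose v := fun i => b (sg i).
have hv : orthonormal_basis v.
  by move=> i j; rewrite /v hb (inj_eq (@perm_inj _ sg)).
pose x' := fun i : 'I_N => if (i %/ d.+1 < A (sg (ordmod d i)))%N then v (ordmod d i)
                            else - v (ordmod d i).
have hpm' : forall i, pmv v (ordmod d i) (x' i) by move=> i; rewrite /x'; case: ifP; [left|right].
have vinj : forall i j, (v i == v j) = (i == j).
  by move=> i j; apply/eqP/eqP => [/(onb_inj hv)|->].
have key : forall j i, (v j == x' i) = ((i %% d.+1 == j) && (i %/ d.+1 < A (sg j)))%N /\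
    (- v j == x' i) = ((i %% d.+1 == j) && ~~ (i %/ d.+1 < A (sg j)))%N.
  move=> j i; have [e|ne] := eqVneq (ordmod d i) j.
    have ej : (i %% d.+1 == j)%N by rewrite -e.
    rewrite ej /x' e; case: ifP => h /=.
      by rewrite eqxx eq_sym (negbTE (onb_neq_neg _ _ hv)).
    by rewrite eqxx (negbTE (onb_neq_neg _ _ hv)).
  have ej : (i %% d.+1 == j)%N = false.
    by apply/negbTE; apply: contra ne => /eqP h; apply/eqP/val_inj.
  rewrite ej /x'; case: ifP => h.
    by rewrite vinj eq_sym (negbTE ne) eq_sym (negbTE (onb_neq_neg _ _ hv)).
  by rewrite (negbTE (onb_neq_neg _ _ hv)) (inj_eq (@oppr_inj _)) vinj eq_sym (negbTE ne).
have Ale : forall j, (A (sg j) <= \sum_(k < N) ((k %% d.+1 == j) : nat))%N.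
  by move=> j; rewrite -Lsg /Ln leq_addr.
exists v, x'; split => //.
- by move=> i; exact: pmv_unit hv (hpm' i).
- apply: funext => y.
  case: (pselect (exists j, y = v j)) => [[j ->]|h1].
    rewrite cnt_nat (eq_bigr _ (fun i _ => congr1 nat_of_bool (proj1 (key j i)))).
    by rewrite cntKE // (minn_idPl (Ale j)) cnt_nat.
  case: (pselect (exists j, y = - v j)) => [[j ->]|h2].
    rewrite cnt_nat (eq_bigr _ (fun i _ => congr1 nat_of_bool (proj2 (key j i)))).
    rewrite sum_andC cntKE // (minn_idPl (Ale j)) -Lsg /Ln addKn.
    by rewrite cnt_nat.
  have -> : cnt x' y = 0.
    rewrite /cnt big1 // => i _; rewrite /dirac_w.
    case: (hpm' i) => e; case: eqP => // ey; exfalso; [apply: h1|apply: h2];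
      by exists (ordmod d i); rewrite ey.
  apply/esym/eqP; apply: contraT => hne; have [k hk] := hsup _ hne; exfalso.
  have ek : k = sg (sg^-1 k)%g by rewrite permKV.
  case: hk => e; [apply: h1|apply: h2]; exists (sg^-1 k)%g; by rewrite e /v -ek.
- move=> i j e; have -> : j = ordmod d i by apply/val_inj.
  exact: hpm'.
Qed.

Lemma part1 (R : realType) (d N : nat) (hN : (0 < N)%N) (w : vec R d -> R) :
     maximizes (@P_N R d N) (@E_inf R d) w <->
     exists (v : 'I_d.+1 -> vec R d) (x : 'I_N -> vec R d),
       [/\ orthonormal_basis v,
           (forall i, sphere (x i)),
           w = (fun y => N%:R^-1 * \sum_(i < N) dirac_w (x i) y) &
           forall (i : 'I_N) (j : 'I_d.+1), (i %% d.+1)%N = j ->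
             x i = v j \/ x i = - v j].
Proof.
have h2 : (0 : R) < 2^-1 by rewrite invr_gt0 ltr0n.
have hc : (0 : R) < N%:R^-1 ^+ 2 by rewrite exprn_gt0 // invr_gt0 ltr0n.
split.
- move=> [[x [hx ->]] hmax].
  pose x0 := fun i : 'I_N => @ebas R d (ordmod d i).
  have hm0 : forall (i : 'I_N) (j : 'I_d.+1), (i %% d.+1)%N = j -> x0 i = @ebas R d j \/ x0 i = - @ebas R d j.
    by move=> i j e; left; rewrite /x0; congr ebas; apply/val_inj.
  have [hx0 F0] := modconfig (@ebas_onb R d) hm0.
  have := hmax _ (ex_intro _ x0 (conj hx0 erefl)).
  rewrite !E_cnt // F0 ler_pM2l // ler_pM2l // => hle.
  have [ub eqs] := bound_d hx.
  have [b [hb hsup hP]] := eqs (le_anti (introT andP (conj ub hle))).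
  have [v [x' [hv hx' ecnt hmod]]] := construct hb hx hsup hP.
  exists v, x'; split => //.
  apply: funext => y; congr (_ * _).
  by have := congr1 (fun f => f y) ecnt; rewrite /cnt => ->.
- move=> [v [x [hv hx -> hmod]]].
  have [_ F] := modconfig hv hmod.
  split; first by exists x.
  move=> u [x' [hx' ->]].
  rewrite !E_cnt // F ler_pM2l // ler_pM2l //.
  by have [] := bound_d hx'.
Qed.

Unset Implicit Arguments.

Theorem theorem1p4 (R : realType) (d : nat) (hd : (0 < d)%N) :
  (forall (N : nat), (0 < N)%N -> forall w : vec R d -> R,
     maximizes (@P_N R d N) (@E_inf R d) w <->
     exists (v : 'I_d.+1 -> vec R d) (x : 'I_N -> vec R d),
       [/\ orthonormal_basis v,
           (forall i, sphere (x i)),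
           w = (fun y => N%:R^-1 * \sum_(i < N) dirac_w (x i) y) &
           forall (i : 'I_N) (j : 'I_d.+1), (i %% d.+1)%N = j ->
             x i = v j \/ x i = - v j]) /\
  (forall w : vec R d -> R,
     maximizes (@P_fin R d) (@E_inf R d) w <->
     exists (v : 'I_d.+1 -> vec R d) (a b : 'I_d.+1 -> R),
       [/\ orthonormal_basis v,
           (forall i, 0 <= a i /\ 0 <= b i),
           (forall i, a i + b i = (d.+1)%:R^-1) &
           w = (fun y => \sum_(i < d.+1)
                   (a i * dirac_w (v i) y + b i * dirac_w (- v i) y))]).
Proof.
split.
- move=> N hN w; exact: part1.
- move=> w; exact: part2.
Qed.
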